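(* Let $X$ be a locally compact, geodesically complete CAT(0)-space connected at infinity, and let $x_0,y\in X$, $y\neq x_0$. For every $K>0$ and $\varepsilon>0$ there exists $\delta>0$ such that for every $x_1\in B(x_0,\delta)$ with $|yx_1|=|yx_0|$, $$\partial_\infty(\operatorname{Shadow}_y(x_1))\subset\mathcal N_{y,K,\varepsilon}\big(\partial_\infty(\operatorname{Shadow}_y(x_0))\big).$$
   Context: For $y,z\in\overline X=X\cup\partial_\infty X$, $[yz]$ denotes a geodesic segment, ray or complete geodesic joining them; $\operatorname{Shadow}_y(x)=\{z\in\overline X:\ \text{there is }[yz]\text{ with }x\in[yz]\}$ and $\partial_\infty(\operatorname{Shadow}_y(x))=\operatorname{Shadow}_y(x)\cap\partial_\infty X$. For $\mathcal V\subset\partial_\infty X$, $\mathcal N_{y,K,\varepsilon}(\mathcal V)$ is the set of $\zeta\in\partial_\infty X$ for which there is $\xi\in\mathcal V$ with $|c(K)\,c_*(K)|<\varepsilon$, where $c=[y\xi]$ and $c_*=[y\zeta]$ are the arclength-parametrized rays from $y$. *)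

(* Defs.v *)
From Stdlib Require Import Reals Lra List.
Open Scope R_scope.
Set Implicit Arguments.

Section Defs.
Variable X : Type.
Variable d : X -> X -> R.

Definition is_metric : Prop :=
  (forall x y, 0 <= d x y) /\ (forall x y, d x y = 0 <-> x = y) /\
  (forall x y, d x y = d y x) /\ (forall x y z, d x z <= d x y + d y z).

Definition complete_metric : Prop :=
  forall u : nat -> X,
    (forall e, 0 < e -> exists N, forall m n, (N <= m)%nat -> (N <= n)%nat -> d (u m) (u n) < e) ->
    exists l, forall e, 0 < e -> exists N, forall n, (N <= n)%nat -> d (u n) l < e.

Definition geod_seg (c : R -> X) (a b : X) (L : R) : Prop :=
  0 <= L /\ c 0 = a /\ c L = b /\
  forall s t, 0 <= s <= L -> 0 <= t <= L -> d (c s) (c t) = Rabs (s - t).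

Definition geodesic_space : Prop :=
  forall a b, exists c, geod_seg c a b (d a b).

Definition eucl (P Q : R * R) : R :=
  sqrt ((fst P - fst Q) ^ 2 + (snd P - snd Q) ^ 2).

(** point at arclength t on the segment from A to B of length L *)
Definition lerp (A B : R * R) (L t : R) : R * R :=
  if Req_EM_T L 0 then A
  else (fst A + (t / L) * (fst B - fst A), snd A + (t / L) * (snd B - snd A)).

Inductive side := S1 | S2 | S3.

Definition CAT0_comparison : Prop :=
  forall (p q r : X) (c1 c2 c3 : R -> X),
    geod_seg c1 p q (d p q) -> geod_seg c2 q r (d q r) -> geod_seg c3 r p (d r p) ->
    forall P Q Rr : R * R,
      eucl P Q = d p q -> eucl Q Rr = d q r -> eucl Rr P = d r p ->
      let len i := match i with S1 => d p q | S2 => d q r | S3 => d r p end in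
      let pt i t := match i with S1 => c1 t | S2 => c2 t | S3 => c3 t end in
      let cpt i t := match i with
                     | S1 => lerp P Q (d p q) t
                     | S2 => lerp Q Rr (d q r) t
                     | S3 => lerp Rr P (d r p) t end in
      forall i j s t, 0 <= s <= len i -> 0 <= t <= len j ->
        d (pt i s) (pt j t) <= eucl (cpt i s) (cpt j t).

(** CAT(0) space (complete, as usual) *)
Definition CAT0 : Prop :=
  is_metric /\ complete_metric /\ geodesic_space /\ CAT0_comparison.

Definition metric_open (U : X -> Prop) : Prop :=
  forall x, U x -> exists r, 0 < r /\ forall y, d x y < r -> U y.

Definition compact_set (Kc : X -> Prop) : Prop :=
  forall (I : Type) (U : I -> X -> Prop),
    (forall i, metric_open (U i)) ->
    (forall x, Kc x -> exists i, U i x) ->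
    exists s : list I, forall x, Kc x -> exists i, In i s /\ U i x.

Definition locally_compact : Prop :=
  forall x, exists Kc r, 0 < r /\ compact_set Kc /\ forall y, d x y < r -> Kc y.

Definition geod_complete : Prop :=
  forall (c : R -> X) a b L, 0 < L -> geod_seg c a b L ->
    exists g : R -> X, (forall s t, d (g s) (g t) = Rabs (s - t)) /\
                       (forall t, 0 <= t <= L -> g t = c t).

(** geodesic rays; boundary points are represented by rays up to asymptoty *)
Definition is_ray (c : R -> X) : Prop :=
  forall s t, 0 <= s -> 0 <= t -> d (c s) (c t) = Rabs (s - t).

Definition ray_from (y : X) (c : R -> X) : Prop := is_ray c /\ c 0 = y.

Definition asymp (c c' : R -> X) : Prop :=
  exists B, forall t, 0 <= t -> d (c t) (c' t) <= B.

(** ∂∞(Shadow_y(x)): boundary points ζ such that a ray [yζ] passes through x *)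
Definition bd_shadow (y x : X) (zeta : R -> X) : Prop :=
  exists c, ray_from y c /\ asymp c zeta /\ exists t, 0 <= t /\ c t = x.

Definition Nbhd (y : X) (K eps : R) (V : (R -> X) -> Prop) (zeta : R -> X) : Prop :=
  exists xi, is_ray xi /\ V xi /\
    forall c cs, ray_from y c -> asymp c xi -> ray_from y cs -> asymp cs zeta ->
      d (c K) (cs K) < eps.

Definition cone_open (o : X) (U : (R -> X) -> Prop) : Prop :=
  (forall xi eta, is_ray xi -> is_ray eta -> asymp xi eta -> U xi -> U eta) /\
  forall xi, is_ray xi -> U xi ->
    exists K eps, 0 < K /\ 0 < eps /\
      forall zeta, is_ray zeta -> Nbhd o K eps (fun eta => asymp eta xi) zeta -> U zeta.

Definition connected_at_infinity : Prop :=
  forall (o : X) (A B : (R -> X) -> Prop),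
    cone_open o A -> cone_open o B ->
    (forall zeta, is_ray zeta -> A zeta \/ B zeta) ->
    (forall zeta, is_ray zeta -> ~ (A zeta /\ B zeta)) ->
    (forall zeta, is_ray zeta -> ~ A zeta) \/ (forall zeta, is_ray zeta -> ~ B zeta).

End Defs.

(* Main.v *)
Require Import Defs.
From Stdlib Require Import Reals Lra Lia List Classical ClassicalEpsilon.
Open Scope R_scope.
Set Implicit Arguments.


Lemma m_pos X (d : X -> X -> R) : is_metric d -> forall x y, 0 <= d x y.
Proof. intros H; apply H. Qed.
Lemma m_refl X (d : X -> X -> R) : is_metric d -> forall x, d x x = 0.
Proof. intros (_&H&_) x; apply H; auto. Qed.
Lemma m_eq X (d : X -> X -> R) : is_metric d -> forall x y, d x y = 0 -> x = y.
Proof. intros (_&H&_) x y; apply H. Qed.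
Lemma m_sym X (d : X -> X -> R) : is_metric d -> forall x y, d x y = d y x.
Proof. intros (_&_&H&_); apply H. Qed.
Lemma m_tri X (d : X -> X -> R) : is_metric d -> forall x y z, d x z <= d x y + d y z.
Proof. intros (_&_&_&H); apply H. Qed.

Lemma le_eps a b : (forall e, 0 < e -> a <= b + e) -> a <= b.
Proof. intros H. destruct (Rle_dec a b); auto. specialize (H ((a-b)/2)). lra. Qed.

Lemma proj_ball X (d : X -> X -> R) : is_metric d -> geodesic_space d ->
  forall y z T, 0 <= T <= d y z -> exists w, d y w = T /\ d w z = d y z - T.
Proof.
  intros Hm Hg y z T HT. destruct (Hg y z) as [c (H0&H1&H2&H3)].
  exists (c T). rewrite <- H1. split.
  - rewrite (H3 0 T) by lra. rewrite Rabs_left1 by lra. lra.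
  - rewrite <- H2 at 1. rewrite (H3 T (d y z)) by lra. rewrite H1. rewrite Rabs_left1 by lra. lra.
Qed.


Lemma sqrt_sq_eq x y : 0 <= y -> x = y * y -> sqrt x = y.
Proof. intros Hy ->. apply sqrt_square; auto. Qed.

Lemma cmp X (d : X -> X -> R) : is_metric d -> geodesic_space d -> CAT0_comparison d ->
  forall (c c' : R -> X) y t s, 0 < t -> 0 <= s <= t -> c 0 = y -> c' 0 = y ->
  (forall u v, 0 <= u <= t -> 0 <= v <= t -> d (c u) (c v) = Rabs (u - v)) ->
  (forall u v, 0 <= u <= t -> 0 <= v <= t -> d (c' u) (c' v) = Rabs (u - v)) ->
  d (c s) (c' s) <= s / t * d (c t) (c' t).
Proof.
  intros Hm Hg Hcat c c' y t s Ht Hs H0 H0' Hc Hc'.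
  assert (E1 : d y (c t) = t).
  { rewrite <- H0, Hc by lra. rewrite Rabs_left1; lra. }
  assert (E2 : d (c' t) y = t).
  { rewrite <- H0', Hc' by lra. rewrite Rabs_right; lra. }
  set (D := d (c t) (c' t)).
  assert (HD0 : 0 <= D) by (apply (m_pos Hm)).
  assert (HD : D <= 2 * t).
  { unfold D. eapply Rle_trans. apply (m_tri Hm _ y). rewrite (m_sym Hm (c t) y), E1, (m_sym Hm y), E2. lra. }
  set (a := t - D * D / (2 * t)).
  assert (Ha1 : a <= t).
  { unfold a. assert (0 <= D * D / (2*t)). apply Rle_mult_inv_pos; nra. lra. }
  assert (Ha2 : - t <= a).
  { unfold a. assert (D * D / (2*t) <= 2 * t). apply Rmult_le_reg_r with (2*t). lra.
    unfold Rdiv. rewrite Rmult_assoc, Rinv_l by lra. nra. lra. }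
  set (b := sqrt (t * t - a * a)).
  assert (Hbb : b * b = t * t - a * a). { unfold b. apply sqrt_sqrt. nra. }
  assert (Hb0 : 0 <= b) by apply sqrt_pos.
  assert (Hta : 2 * t * (t - a) = D * D).
  { unfold a. field. lra. }
  destruct (Hg (c t) (c' t)) as [c2 Hc2].
  assert (G1 : geod_seg d c y (c t) (d y (c t))).
  { rewrite E1. repeat split; auto; lra. }
  assert (G3 : geod_seg d (fun u => c' (t - u)) (c' t) y (d (c' t) y)).
  { rewrite E2. repeat split; try lra.
    - f_equal; ring.
    - rewrite <- H0'. f_equal; ring.
    - intros u v Hu Hv. rewrite Hc' by lra. replace (t - u - (t - v)) with (v - u) by ring.
      apply Rabs_minus_sym. }
  assert (HPQ : eucl (0,0) (t,0) = d y (c t)).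
  { rewrite E1. unfold eucl; simpl. apply sqrt_sq_eq; lra. }
  assert (HQR : eucl (t,0) (a,b) = d (c t) (c' t)).
  { unfold eucl; simpl. apply sqrt_sq_eq. apply HD0. fold D. nra. }
  assert (HRP : eucl (a,b) (0,0) = d (c' t) y).
  { rewrite E2. unfold eucl; simpl. apply sqrt_sq_eq; nra. }
  pose proof (Hcat y (c t) (c' t) c c2 (fun u => c' (t - u)) G1 Hc2 G3 _ _ _ HPQ HQR HRP S1 S3 s (t - s)) as HH.
  simpl in HH. rewrite E1, E2 in HH.
  specialize (HH ltac:(lra) ltac:(lra)).
  replace (t - (t - s)) with s in HH by ring.
  eapply Rle_trans. apply HH.
  unfold lerp. destruct (Req_EM_T t 0) as [e|_]; [lra|]. simpl.
  right. unfold eucl; simpl. apply sqrt_sq_eq.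
  apply Rmult_le_pos; auto. apply Rle_mult_inv_pos; lra.
  fold D.
  assert (Hs2 : (s / t * D) * (s / t * D) = (s/t)*(s/t) * (D * D)) by ring.
  rewrite Hs2, <- Hta.
  match goal with |- ?L = _ => replace L with ((s/t)*(s/t) * ((t - a) * (t - a) + b * b)) by (field; lra) end.
  rewrite Hbb. field. lra.
Qed.


Lemma ray_cmp X (d : X -> X -> R) : is_metric d -> geodesic_space d -> CAT0_comparison d ->
  forall y c c' t s, ray_from d y c -> ray_from d y c' -> 0 < t -> 0 <= s <= t ->
  d (c s) (c' s) <= s / t * d (c t) (c' t).
Proof.
  intros Hm Hg Hc y c c' t s [R1 E1] [R2 E2] Ht Hs.
  eapply (cmp Hm Hg Hc) with (y := y); eauto.
  - intros u v Hu Hv; apply R1; lra.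
  - intros u v Hu Hv; apply R2; lra.
Qed.

Lemma ray_uniq X (d : X -> X -> R) : is_metric d -> geodesic_space d -> CAT0_comparison d ->
  forall y c c', ray_from d y c -> ray_from d y c' -> asymp d c c' ->
  forall s, 0 <= s -> c s = c' s.
Proof.
  intros Hm Hg Hc y c c' R1 R2 [B HB] s Hs.
  apply (m_eq Hm). apply Rle_antisym; [|apply (m_pos Hm)].
  apply le_eps. intros e He. rewrite Rplus_0_l.
  assert (HB0 : 0 <= B). { eapply Rle_trans; [apply (m_pos Hm)|apply (HB 0); lra]. }
  set (t := s + 1 + s * B / e).
  assert (Ht : s + 1 <= t). { unfold t. assert (0 <= s * B / e). apply Rle_mult_inv_pos; nra. lra. }
  eapply Rle_trans. apply (ray_cmp Hm Hg Hc (t:=t) R1 R2); lra.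
  assert (H1 : d (c t) (c' t) <= B) by (apply HB; lra).
  assert (H2 : s * B <= e * t).
  { unfold t. replace (e * (s + 1 + s * B / e)) with (e * (s + 1) + s * B) by (field; lra). nra. }
  apply Rle_trans with (s / t * B).
  apply Rmult_le_compat_l; auto. apply Rle_mult_inv_pos; lra.
  unfold Rdiv. apply Rmult_le_reg_r with t. lra.
  replace (s * / t * B * t) with (s * B) by (field; lra). lra.
Qed.

Lemma asymp_trans X (d : X -> X -> R) : is_metric d ->
  forall c c' z, asymp d c z -> asymp d c' z -> asymp d c c'.
Proof.
  intros Hm c c' z [B1 H1] [B2 H2]. exists (B1 + B2). intros t Ht.
  eapply Rle_trans. apply (m_tri Hm _ (z t)). rewrite (m_sym Hm (z t)).
  specialize (H1 t Ht); specialize (H2 t Ht). lra.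
Qed.


Lemma ball_open X (d : X -> X -> R) : is_metric d -> forall x r, metric_open d (fun z => d x z < r).
Proof.
  intros Hm x r z Hz. exists (r - d x z). split; [lra|].
  intros w Hw. pose proof (m_tri Hm x z w). lra.
Qed.

Lemma compact_union X (d : X -> X -> R) A B : compact_set d A -> compact_set d B ->
  compact_set d (fun z => A z \/ B z).
Proof.
  intros HA HB I U HU Hcov.
  destruct (HA I U HU) as [s1 H1]. { intros x Hx; apply Hcov; auto. }
  destruct (HB I U HU) as [s2 H2]. { intros x Hx; apply Hcov; auto. }
  exists (s1 ++ s2). intros x [Hx|Hx].
  - destruct (H1 x Hx) as [i [Hi Ui]]. exists i; split; auto. apply in_or_app; auto.
  - destruct (H2 x Hx) as [i [Hi Ui]]. exists i; split; auto. apply in_or_app; auto.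
Qed.

Lemma compact_list X (d : X -> X -> R) (s : list X) (Kf : X -> X -> Prop) :
  (forall x, In x s -> compact_set d (Kf x)) ->
  compact_set d (fun z => exists x, In x s /\ Kf x z).
Proof.
  induction s as [|a s IH]; intros H.
  - intros I U _ _. exists nil. intros x [y [[] _]].
  - assert (C : compact_set d (fun z => Kf a z \/ exists x, In x s /\ Kf x z)).
    { apply compact_union. apply H; simpl; auto. apply IH. intros; apply H; simpl; auto. }
    intros I U HU Hcov. destruct (C I U HU) as [l Hl].
    { intros x [Hx|[y [Hy Hk]]]; apply Hcov. exists a; simpl; auto. exists y; simpl; auto. }
    exists l. intros x [y [[<-|Hy] Hk]]; apply Hl; auto. right; eauto.
Qed.

Lemma compact_tb X (d : X -> X -> R) : is_metric d -> forall C, compact_set d C ->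
  forall e, 0 < e -> exists L : list X, forall z, C z -> exists c, In c L /\ d c z < e.
Proof.
  intros Hm C HC e He.
  destruct (HC X (fun x z => d x z < e)) as [L HL].
  - intros x; apply ball_open; auto.
  - intros x _. exists x. rewrite (m_refl Hm). auto.
  - exists L. auto.
Qed.

Lemma list_max_nat (A : Type) (f : A -> nat) (s : list A) : exists N, forall a, In a s -> (f a <= N)%nat.
Proof.
  induction s as [|a s [N HN]].
  - exists 0%nat. intros a [].
  - exists (Nat.max (f a) N). intros b [<-|Hb]. apply Nat.le_max_l.
    eapply Nat.le_trans. apply HN; auto. apply Nat.le_max_r.
Qed.

Lemma list_min_pos (A : Type) (f : A -> R) (s : list A) :
  (forall a, In a s -> 0 < f a) -> exists e, 0 < e /\ forall a, In a s -> e <= f a.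
Proof.
  induction s as [|a s IH]; intros H.
  - exists 1. split; [lra|]. intros a [].
  - destruct IH as [e [He He']]. intros; apply H; simpl; auto.
    exists (Rmin (f a) e). split. apply Rmin_pos; auto. apply H; simpl; auto.
    intros b [<-|Hb]. apply Rmin_l. eapply Rle_trans. apply Rmin_r. auto.
Qed.

Lemma cluster X (d : X -> X -> R) : is_metric d -> forall C, compact_set d C ->
  forall p : nat -> X, (forall n, C (p n)) ->
  exists q, forall e, 0 < e -> forall N, exists n, (N <= n)%nat /\ d q (p n) < e.
Proof.
  intros Hm C HC p Hp. apply NNPP. intros Hn.
  destruct (HC (X * R * nat)%type
     (fun i z => let '(q, e, N) := i in 0 < e /\ (forall n, (N <= n)%nat -> e <= d q (p n)) /\ d q z < e))
     as [s Hs].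
  - intros [[q e] N] z [He [HN Hz]]. exists (e - d q z). split; [lra|].
    intros w Hw. repeat split; auto. pose proof (m_tri Hm q z w). lra.
  - intros x _. assert (Hx : ~ forall e, 0 < e -> forall N, exists n, (N <= n)%nat /\ d x (p n) < e).
    { intros H; apply Hn; eauto. }
    apply not_all_ex_not in Hx. destruct Hx as [e He].
    apply imply_to_and in He. destruct He as [He He2].
    apply not_all_ex_not in He2. destruct He2 as [N HN].
    exists (x, e, N). repeat split; auto.
    + intros n Hnn. apply Rnot_lt_le. intros Hlt. apply HN. eauto.
    + rewrite (m_refl Hm). auto.
  - destruct (list_max_nat (fun i : X * R * nat => snd i) s) as [M HM].
    destruct (Hs (p M) (Hp M)) as [[[q e] N] [Hi [He [HN Hz]]]].
    specialize (HM _ Hi). simpl in HM. specialize (HN M HM). lra.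
Qed.


Lemma hpow_small e : 0 < e -> exists N, forall n, (N <= n)%nat -> (1/2)^n < e.
Proof.
  intros He. destruct (pow_lt_1_zero (1/2)) with (y := e) as [N HN]; auto.
  rewrite Rabs_right; lra.
  exists N. intros n Hn. specialize (HN n Hn). rewrite Rabs_right in HN; auto.
  apply Rle_ge, pow_le; lra.
Qed.

Lemma hpow_pos n : 0 < (1/2)^n.
Proof. apply pow_lt; lra. Qed.

Lemma dep_seq (A : Type) (P : nat -> A -> Prop) (Q : nat -> A -> A -> Prop) :
  (exists a, P 0%nat a) -> (forall k a, P k a -> exists b, P (S k) b /\ Q k a b) ->
  exists f : nat -> A, forall k, P k (f k) /\ Q k (f k) (f (S k)).
Proof.
  intros [a0 H0] Hs.
  pose (g := fun k (x : {a | P k a}) =>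
         constructive_indefinite_description _ (Hs k (proj1_sig x) (proj2_sig x))).
  pose (h := fix h (k : nat) : {a | P k a} :=
         match k return {a | P k a} with
         | O => exist _ a0 H0
         | S k' => let y := g k' (h k') in exist _ (proj1_sig y) (proj1 (proj2_sig y)) end).
  exists (fun k => proj1_sig (h k)). intro k. split.
  - apply proj2_sig.
  - simpl. exact (proj2 (proj2_sig (g k (h k)))).
Qed.


Definition Fin X (I : Type) (U : I -> X -> Prop) (A : X -> Prop) :=
  exists s : list I, forall x, A x -> exists i, In i s /\ U i x.

Lemma Fin_mono (X I : Type) (U : I -> X -> Prop) (A B : X -> Prop) : (forall z, A z -> B z) -> Fin U B -> Fin U A.
Proof. intros H [s Hs]. exists s. auto. Qed.

Lemma Fin_list (X I : Type) (U : I -> X -> Prop) (L : list X) (A : X -> X -> Prop) :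
  (forall c, In c L -> Fin U (A c)) -> Fin U (fun z => exists c, In c L /\ A c z).
Proof.
  induction L as [|a L IH]; intros H.
  - exists nil. intros x [c [[] _]].
  - destruct (H a (or_introl eq_refl)) as [s1 H1].
    destruct IH as [s2 H2]. intros; apply H; simpl; auto.
    exists (s1 ++ s2). intros x [c [[<-|Hc] Hx]].
    + destruct (H1 x Hx) as [i [Hi Ui]]. exists i; split; auto. apply in_or_app; auto.
    + destruct (H2 x (ex_intro _ c (conj Hc Hx))) as [i [Hi Ui]]. exists i; split; auto. apply in_or_app; auto.
Qed.

Lemma Fin_split (X I : Type) (U : I -> X -> Prop) (A : X -> Prop) (L : list X) (B : X -> X -> Prop) :
  (forall z, A z -> exists c, In c L /\ B c z) -> ~ Fin U A ->
  exists c, In c L /\ ~ Fin U (fun z => A z /\ B c z).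
Proof.
  intros Hc HF. apply NNPP. intros Hn. apply HF.
  eapply Fin_mono; [|apply (@Fin_list X I U L (fun c z => A z /\ B c z))].
  - intros z Hz. destruct (Hc z Hz) as [c [Hin HB]]. exists c; auto.
  - intros c Hin. apply NNPP. intros Hn2. apply Hn. exists c; auto.
Qed.

Lemma compact_of_tb X (d : X -> X -> R) : is_metric d -> complete_metric d ->
  forall SS : X -> Prop,
  (forall l, (forall e, 0 < e -> exists z, SS z /\ d z l < e) -> SS l) ->
  (forall e, 0 < e -> exists L : list X, forall z, SS z -> exists c, In c L /\ d c z < e) ->
  compact_set d SS.
Proof.
  intros Hm Hcomp SS Hcl Htb I U HU Hcov.
  apply NNPP. intros HF. change (~ Fin U SS) in HF.
  set (Bk := fun c k z => SS z /\ d c z < (1/2)^k).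
  assert (Hne : forall A, ~ Fin U A -> exists z, A z).
  { intros A HA. apply NNPP. intros Hn. apply HA. exists nil. intros x Hx. exfalso; apply Hn; eauto. }
  destruct (dep_seq (fun k c => ~ Fin U (Bk c k)) (fun k c c' => d c c' < 2 * (1/2)^k)) as [f Hf].
  - destruct (Htb 1) as [L HL]; [lra|].
    destruct (@Fin_split X I U _ L (fun c z => d c z < 1) HL HF) as [c [_ Hc]].
    exists c. unfold Bk. simpl. auto.
  - intros k c Hc.
    destruct (Htb ((1/2)^(S k))) as [L HL]. apply hpow_pos.
    destruct (@Fin_split X I U (Bk c k) L (fun c0 z => d c0 z < (1/2)^(S k))) as [c' [_ Hc']]; auto.
    { intros z [Hz _]. auto. }
    exists c'. split.
    + intros HH; apply Hc'. eapply Fin_mono; [|apply HH]. intros z [[Hz _] Hz']. split; auto.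
    + destruct (Hne _ Hc') as [z [[_ Hz1] Hz2]].
      pose proof (m_tri Hm c z c'). rewrite (m_sym Hm z c') in H.
      simpl in Hz2. assert (0 < (1/2)^k) by apply hpow_pos. lra.
  - assert (Hd : forall k j, d (f k) (f (k + j)%nat) <= 4 * (1/2)^k - 4 * (1/2)^(k+j)).
    { intros k j. induction j.
      - rewrite Nat.add_0_r, (m_refl Hm). lra.
      - eapply Rle_trans. apply (m_tri Hm _ (f (k + j)%nat)).
        replace (k + S j)%nat with (S (k + j)) by lia.
        destruct (Hf (k + j)%nat) as [_ Hq]. simpl. simpl in Hq. lra. }
    assert (Hd2 : forall k m, (k <= m)%nat -> d (f k) (f m) <= 4 * (1/2)^k).
    { intros k m Hkm. replace m with (k + (m - k))%nat by lia.
      pose proof (Hd k (m - k)%nat). pose proof (hpow_pos (k + (m - k))). lra. }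
    destruct (Hcomp f) as [l Hl].
    { intros e He. destruct (hpow_small (e:=e/8)) as [N HN]. lra.
      exists N. intros m n Hm' Hn'. specialize (HN N (le_n N)).
      pose proof (Hd2 N m Hm') as A1. pose proof (Hd2 N n Hn') as A2.
      pose proof (m_tri Hm (f m) (f N) (f n)) as A3. rewrite (m_sym Hm (f m) (f N)) in A3. lra. }
    assert (Hclose : forall e, 0 < e -> exists n, (1/2)^n < e /\ d (f n) l < e).
    { intros e He. destruct (hpow_small He) as [N1 H1]. destruct (Hl e He) as [N2 H2].
      exists (Nat.max N1 N2). split. apply H1; lia. apply H2; lia. }
    assert (HSl : SS l).
    { apply Hcl. intros e He. destruct (Hclose (e/2)) as [n [H1 H2]]. lra.
      destruct (Hne _ (proj1 (Hf n))) as [z [Hz Hz']]. exists z. split; auto.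
      pose proof (m_tri Hm z (f n) l). rewrite (m_sym Hm z (f n)) in H. lra. }
    destruct (Hcov l HSl) as [i Hi]. destruct (HU i l Hi) as [r [Hr HUr]].
    destruct (Hclose (r/2)) as [n [H1 H2]]. lra.
    apply (proj1 (Hf n)). exists (i :: nil). intros z [Hz Hz']. exists i. split. simpl; auto.
    apply HUr. pose proof (m_tri Hm l (f n) z). rewrite (m_sym Hm l (f n)) in H. lra.
Qed.


Definition good X (d : X -> X -> R) y T := exists Kc, compact_set d Kc /\ forall z, d y z <= T -> Kc z.

Lemma choice_fun (A B : Type) (P : A -> B -> Prop) : (forall a, exists b, P a b) -> exists f, forall a, P a (f a).
Proof.
  intros H. exists (fun a => proj1_sig (constructive_indefinite_description _ (H a))).
  intros a. apply proj2_sig.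
Qed.

Lemma good_mono X (d : X -> X -> R) y T T' : good d y T -> T' <= T -> good d y T'.
Proof. intros [K [HK HK']] H. exists K. split; auto. intros z Hz. apply HK'. lra. Qed.

Lemma good_base X (d : X -> X -> R) : is_metric d -> locally_compact d -> forall y, exists r, 0 < r /\ good d y r.
Proof.
  intros Hm Hlc y. destruct (Hlc y) as [K [r [Hr [HK HK']]]].
  exists (r/2). split. lra. exists K. split; auto. intros z Hz. apply HK'. lra.
Qed.

Lemma good_step X (d : X -> X -> R) : is_metric d -> geodesic_space d -> locally_compact d ->
  forall y T, 0 <= T -> good d y T -> exists eta, 0 < eta /\ good d y (T + eta).
Proof.
  intros Hm Hg Hlc y T HT [C [HC HC']].
  destruct (choice_fun (fun x (p : (X -> Prop) * R) => 0 < snd p /\ compact_set d (fst p) /\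
              forall z, d x z < snd p -> fst p z)) as [f Hf].
  { intros x. destruct (Hlc x) as [K [r H]]. exists (K, r). exact H. }
  destruct (HC X (fun x z => d x z < snd (f x) / 2)) as [s Hs].
  { intros x. apply ball_open; auto. }
  { intros x _. exists x. rewrite (m_refl Hm). destruct (Hf x) as [H _]. lra. }
  destruct (list_min_pos (fun x => snd (f x) / 2) s) as [eta [Heta Heta']].
  { intros a _. destruct (Hf a) as [H _]. lra. }
  exists eta. split; auto.
  exists (fun z => exists x, In x s /\ fst (f x) z). split.
  - apply compact_list. intros x _. apply Hf.
  - intros z Hz. destruct (Rle_dec (d y z) T) as [Hle|Hgt].
    + destruct (Hs z (HC' z Hle)) as [x [Hin Hx]]. exists x. split; auto.
      apply Hf. destruct (Hf x) as [H _]. lra.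
    + destruct (proj_ball Hm Hg y z (T:=T)) as [w [Hw1 Hw2]]. lra.
      destruct (Hs w (HC' w ltac:(lra))) as [x [Hin Hx]]. exists x. split; auto.
      apply Hf. pose proof (m_tri Hm x w z). specialize (Heta' x Hin). simpl in Heta'. lra.
Qed.

Lemma good_limit X (d : X -> X -> R) : is_metric d -> complete_metric d -> geodesic_space d ->
  forall y T, 0 < T -> (forall T', 0 <= T' < T -> good d y T') -> good d y T.
Proof.
  intros Hm Hcomp Hg y T HT Hgood.
  exists (fun z => d y z <= T). split; auto.
  apply compact_of_tb; auto.
  - intros l Hl. apply le_eps. intros e He. destruct (Hl e He) as [z [Hz Hz']].
    pose proof (m_tri Hm y z l). lra.
  - intros e He. set (T' := Rmax 0 (T - e/2)).
    assert (HT' : 0 <= T' < T). { unfold T'. split. apply Rmax_l. apply Rmax_lub_lt; lra. }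
    destruct (Hgood T' HT') as [C [HC HC']].
    destruct (compact_tb Hm HC (e:=e/2)) as [L HL]. lra.
    exists L. intros z Hz. destruct (Rle_dec (d y z) T') as [Hle|Hgt].
    + destruct (HL z (HC' z Hle)) as [c [Hc Hc']]. exists c. split; auto. lra.
    + destruct (proj_ball Hm Hg y z (T:=T')) as [w [Hw1 Hw2]]. lra.
      destruct (HL w (HC' w ltac:(lra))) as [c [Hc Hc']]. exists c. split; auto.
      pose proof (m_tri Hm c w z). assert (T - e/2 <= T') by apply Rmax_r. lra.
Qed.

Lemma good_all X (d : X -> X -> R) : is_metric d -> complete_metric d -> geodesic_space d ->
  locally_compact d -> forall y T, good d y T.
Proof.
  intros Hm Hcomp Hg Hlc y M. apply NNPP. intros HM.
  destruct (good_base Hm Hlc y) as [r0 [Hr0 G0]].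
  set (E := fun T => 0 <= T /\ good d y T).
  assert (Hb : bound E).
  { exists M. intros T [H0 HT]. apply Rnot_lt_le. intros Hlt. apply HM. eapply good_mono; eauto. lra. }
  destruct (completeness E Hb) as [m [Hub Hlub]].
  { exists 0. split. lra. eapply good_mono; eauto. lra. }
  assert (Hm0 : r0 <= m). { apply Hub. split; auto. lra. }
  assert (Gm : good d y m).
  { apply good_limit; auto. lra. intros T' HT'.
    apply NNPP. intros Hn. assert (m <= T'). { apply Hlub. intros T [H1 H2].
      apply Rnot_lt_le. intros Hlt. apply Hn. eapply good_mono; eauto. lra. } lra. }
  destruct (good_step Hm Hg Hlc (y:=y) (T:=m)) as [eta [Heta G]]; auto. lra.
  assert (m + eta <= m). { apply Hub. split; auto. lra. } lra.
Qed.


Lemma concat X (d : X -> X -> R) : is_metric d ->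
  forall s1 s2 y x0 q, geod_seg d s1 y x0 (d y x0) -> geod_seg d s2 x0 q (d x0 q) ->
  d y q = d y x0 + d x0 q ->
  geod_seg d (fun t => if Rle_dec t (d y x0) then s1 t else s2 (t - d y x0)) y q (d y q).
Proof.
  intros Hm s1 s2 y x0 q [H10 [H11 [H12 H13]]] [H20 [H21 [H22 H23]]] E.
  set (r := d y x0) in *. set (L2 := d x0 q) in *.
  assert (mixed : forall s t, 0 <= s <= r -> r < t <= r + L2 -> d (s1 s) (s2 (t - r)) = t - s).
  { intros s t Hs Ht. apply Rle_antisym.
    - eapply Rle_trans. apply (m_tri Hm _ x0).
      rewrite <- H12 at 1. rewrite H13 by lra. rewrite <- H21 at 1. rewrite H23 by lra.
      rewrite Rabs_left1 by lra. rewrite Rabs_left1 by lra. lra.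
    - pose proof (m_tri Hm y (s1 s) q) as T1. pose proof (m_tri Hm (s1 s) (s2 (t - r)) q) as T2.
      assert (A1 : d y (s1 s) = s). { rewrite <- H11 at 1. rewrite H13 by lra. rewrite Rabs_left1; lra. }
      assert (A2 : d (s2 (t - r)) q = r + L2 - t).
      { rewrite <- H22. rewrite H23 by lra. rewrite Rabs_left1; lra. }
      lra. }
  repeat split.
  - apply (m_pos Hm).
  - destruct (Rle_dec 0 r); auto. pose proof (m_pos Hm y x0). fold r in H. lra.
  - destruct (Rle_dec (d y q) r). assert (L2 = 0) by lra.
    assert (Eq : x0 = q) by (apply (m_eq Hm); auto). rewrite <- Eq at 2. rewrite <- H12. f_equal. lra.
    rewrite <- H22 at 2. f_equal. lra.
  - intros s t Hs Ht. rewrite E in Hs, Ht.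
    destruct (Rle_dec s r); destruct (Rle_dec t r).
    + apply H13; lra.
    + rewrite mixed by lra. rewrite Rabs_left1; lra.
    + rewrite (m_sym Hm), mixed by lra. rewrite Rabs_right; lra.
    + rewrite H23 by lra. f_equal. ring.
Qed.


Unset Implicit Arguments.

Theorem corollary4 (X : Type) (d : X -> X -> R) :
  CAT0 d -> locally_compact d -> geod_complete d -> connected_at_infinity d ->
  forall x0 y : X, y <> x0 ->
  forall K eps : R, 0 < K -> 0 < eps ->
  exists delta, 0 < delta /\
    forall x1 : X, d x0 x1 < delta -> d y x1 = d y x0 ->
    forall zeta : R -> X, is_ray d zeta -> bd_shadow d y x1 zeta ->
      Nbhd d y K eps (bd_shadow d y x0) zeta.
Proof.
  intros HC Hlc Hgc _ x0 y Hne K eps HK Heps.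
  destruct HC as (Hm & Hcomp & Hg & Hcat).
  set (r := d y x0).
  assert (Hr : 0 < r).
  { destruct (m_pos Hm y x0) as [H|H]; auto. exfalso. apply Hne. apply (m_eq Hm). auto. }
  set (M := K + r).
  assert (HM0 : 0 < M) by (unfold M; lra).
  assert (HMr : M = K + r) by reflexivity.
  apply NNPP. intros Hno.
  assert (Hseq : forall n : nat, exists g : R -> X, exists x1 zeta,
    d x0 x1 < (1/2)^n /\ is_ray d zeta /\ ray_from d y g /\ asymp d g zeta /\ g r = x1 /\
    ~ Nbhd d y K eps (bd_shadow d y x0) zeta).
  { intros n. apply NNPP. intros H. apply Hno. exists ((1/2)^n). split. apply hpow_pos.
    intros x1 H1 H2 zeta Hz Hsh. apply NNPP. intros HN. apply H.
    destruct Hsh as [g [[Rg Eg] [Has [t [Ht Hgt]]]]].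
    assert (Et : t = r).
    { rewrite <- H2, <- Eg, <- Hgt, Rg by lra. rewrite Rabs_left1; lra. }
    subst t. exists g, x1, zeta. repeat split; auto. }
  destruct (choice_fun _ Hseq) as [f Hf].
  set (p := fun n => f n M).
  assert (Hp1 : forall n, d y (p n) = M).
  { intros n. destruct (Hf n) as [x1 [zeta [_ [_ [[Rg Eg] _]]]]]. unfold p.
    rewrite <- Eg, Rg by (unfold M; lra). rewrite Rabs_left1; unfold M; lra. }
  assert (Hp2 : forall n, d x0 (p n) < (1/2)^n + (M - r)).
  { intros n. destruct (Hf n) as [x1 [zeta [H1 [_ [[Rg Eg] [_ [Hx1 _]]]]]]]. unfold p.
    pose proof (m_tri Hm x0 x1 (f n M)). rewrite <- Hx1 in H at 2. rewrite Rg in H by (unfold M; lra).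
    rewrite Rabs_left1 in H by (unfold M; lra). lra. }
  destruct (good_all Hm Hcomp Hg Hlc y M) as [C [HC HC']].
  destruct (cluster Hm HC p) as [q Hq].
  { intros n. apply HC'. rewrite Hp1. lra. }
  assert (Hq1 : d y q = M).
  { apply Rle_antisym; apply le_eps; intros e He; destruct (Hq e He 0%nat) as [n [_ Hn]].
    - pose proof (m_tri Hm y (p n) q). rewrite (m_sym Hm (p n) q) in H. rewrite Hp1 in H. lra.
    - pose proof (m_tri Hm y q (p n)). rewrite Hp1 in H. lra. }
  assert (Hq2 : d x0 q <= M - r).
  { apply le_eps. intros e He. destruct (hpow_small (e:=e/2)) as [N HN]. lra.
    destruct (Hq (e/2) ltac:(lra) N) as [n [Hn1 Hn2]].
    specialize (HN n Hn1). specialize (Hp2 n).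
    pose proof (m_tri Hm x0 (p n) q). rewrite (m_sym Hm (p n) q) in H. lra. }
  assert (Hq3 : d y q = d y x0 + d x0 q).
  { pose proof (m_tri Hm y x0 q). fold r in H |- *. lra. }
  destruct (Hg y x0) as [s1 Hs1]. destruct (Hg x0 q) as [s2 Hs2].
  pose proof (concat Hm Hs1 Hs2 Hq3) as Hc.
  set (c := fun t => if Rle_dec t (d y x0) then s1 t else s2 (t - d y x0)) in Hc.
  destruct (Hgc c y q (d y q)) as [g [Hg1 Hg2]]; auto. lra.
  assert (Rg : ray_from d y g).
  { split. intros s t _ _; apply Hg1. rewrite Hg2. apply Hc. split; lra. }
  assert (Hgr : g r = x0).
  { rewrite Hg2 by lra. unfold c. fold r. destruct (Rle_dec r r); [|lra]. destruct Hs1 as (_&_&E&_). exact E. }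
  assert (HgM : g M = q).
  { rewrite <- Hq1, Hg2. apply Hc. split; lra. }
  destruct (Hq eps Heps 0%nat) as [n [_ Hn]].
  destruct (Hf n) as [x1 [zeta [_ [Hz [Rf [Hasf [_ HN]]]]]]].
  apply HN. exists g. split; [apply Rg|]. split.
  - exists g. split; auto. split. exists 0. intros t _. rewrite (m_refl Hm). lra.
    exists r. split; auto. lra.
  - intros c1 cs R1 Ha1 Rcs Hacs.
    rewrite (ray_uniq Hm Hg Hcat R1 Rg Ha1) by lra.
    rewrite (ray_uniq Hm Hg Hcat Rcs Rf (asymp_trans Hm Hacs Hasf)) by lra.
    eapply Rle_lt_trans. apply (ray_cmp Hm Hg Hcat (t:=M) (s:=K) Rg Rf). unfold M; lra. unfold M; lra.
    rewrite HgM. fold (p n). 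
    assert (0 <= K / M <= 1).
    { unfold M. split. apply Rle_mult_inv_pos; lra.
      unfold Rdiv. apply Rmult_le_reg_r with (K + r). lra. rewrite Rmult_assoc, Rinv_l by lra. lra. }
    pose proof (m_pos Hm q (p n)). nra.
Qed.
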